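(* Let $\pi,\pi'\in\Pi$, $V\in\mathcal F$, and integers $d\ge1$, $h\ge0$; set $J=T_\pi^hV$ and $B'_\gamma=\gamma A'_1+\gamma^{d+h}A'_{d+h}$. Under the concentrability assumption below, \[ \|T^dV^{\pi}-T_{\pi'}V^{\pi}\|_{1,\rho_1}\;\le\;B'_\gamma\,\|V-V^{\pi}\|_{1,\rho_0}+\|T^dJ-T_{\pi'}V\|_{1,\rho_1}. \]
   Context: Consider a discounted infinite-horizon Markov decision process with (measurable) state space $\mathcal S$, finite action set $\mathcal A$, reward function $r:\mathcal S\times\mathcal A\to[0,R_{\max}]$, transition kernel $p(\cdot\mid s,a)$, and discount factor $\gamma\in[0,1)$. Let $V_{\max}=R_{\max}/(1-\gamma)$ and let $\mathcal F$ be the set of bounded measurable functions $\mathcal S\to[0,V_{\max}]$. Let $\Pi$ be the set of stationary deterministic (measurable) policies $\pi:\mathcal S\to\mathcal A$; $V^\pi(s)=\mathbf E[\sum_{t\ge0}\gamma^t r(s_t,\pi(s_t))]$ with $s_0=s$, $s_{t+1}\sim p(\cdot\mid s_t,\pi(s_t))$. For $V\in\mathcal F$: $(T_\pi V)(s)=r(s,\pi(s))+\gamma\int V(\tilde s)\,p(d\tilde s\mid s,\pi(s))$; $(TV)(s)=\max_{a\in\mathcal A}[r(s,a)+\gamma\int V(\tilde s)\,p(d\tilde s\mid s,a)]$; $T^d$, $T_\pi^h$ denote iterated compositions ($T_\pi^0$ is the identity). For a measure $\nu$ on $\mathcal S$, $(\nu P_\pi)(d\tilde s)=\int p(d\tilde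 s\mid s,\pi(s))\,\nu(ds)$. For a measure $\mu$ and measurable $f$, $\|f\|_{1,\mu}=\int|f|\,d\mu$. Let $\rho_0,\rho_1$ be probability distributions on $\mathcal S$. Concentrability assumption: for every $m\ge1$ and every $\mu_1,\ldots,\mu_m\in\Pi$, the measure $\rho_1P_{\mu_1}\cdots P_{\mu_m}$ is absolutely continuous with respect to $\rho_0$, and $A'_m=\sup_{\mu_1,\ldots,\mu_m\in\Pi}\bigl\|\frac{d\,\rho_1P_{\mu_1}\cdots P_{\mu_m}}{d\rho_0}\bigr\|_\infty<\infty$. *)

(* Defs.v *)
From Stdlib Require List.
From HB Require Import structures.
From mathcomp Require Import all_boot all_order all_algebra.
From mathcomp Require Import all_classical all_reals all_analysis measurable_realfun ess_sup_inf.
Set Implicit Arguments. Unset Strict Implicit. Unset Printing Implicit Defensive.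
Import Order.TTheory GRing.Theory Num.Theory.
Import numFieldNormedType.Exports.
Local Open Scope classical_set_scope.
Local Open Scope ring_scope.
Local Open Scope ereal_scope.

(* MDP data: state space S (measurable), finite action set A,
   transition kernel p a s = p(. | s, a) (a probability kernel for each a). *)

Definition is_policy {dS} {S : measurableType dS} {A : finType} (pi : S -> A) : Prop :=
  forall a : A, measurable (pi @^-1` [set a]).

Definition Pop {dS} {S : measurableType dS} {R : realType} {A : finType}
  (p : A -> R.-pker S ~> S) (pi : S -> A) (f : S -> \bar R) : S -> \bar R :=
  fun s => \int[p (pi s) s]_y f y.

Definition Tpi {dS} {S : measurableType dS} {R : realType} {A : finType}
  (r : S -> A -> R) (gamma : R) (p : A -> R.-pker S ~> S) (pi : S -> A)
  (V : S -> \bar R) : S -> \bar R :=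
  fun s => (r s (pi s))%:E + gamma%:E * \int[p (pi s) s]_y V y.

Definition Topt {dS} {S : measurableType dS} {R : realType} {A : finType}
  (r : S -> A -> R) (gamma : R) (p : A -> R.-pker S ~> S)
  (V : S -> \bar R) : S -> \bar R :=
  fun s => \big[maxe/-oo]_(a : A) ((r s a)%:E + gamma%:E * \int[p a s]_y V y).

(* value of policy pi: V^pi(s) = sum_t gamma^t E[r(s_t, pi s_t)] = sum_t gamma^t (P_pi^t r_pi)(s) *)
Definition Vpi {dS} {S : measurableType dS} {R : realType} {A : finType}
  (r : S -> A -> R) (gamma : R) (p : A -> R.-pker S ~> S) (pi : S -> A) : S -> \bar R :=
  fun s => \sum_(0 <= t <oo) ((gamma ^+ t)%:E *
             iter t (Pop p pi) (fun s' => (r s' (pi s'))%:E) s).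

Definition in_F {dS} {S : measurableType dS} {R : realType} (Vmax : R)
  (V : S -> \bar R) : Prop :=
  measurable_fun setT V /\ forall s, 0 <= V s <= Vmax%:E.

Definition norm1 {dS} {S : measurableType dS} {R : realType}
  (mu : {measure set S -> \bar R}) (f : S -> \bar R) : \bar R :=
  \int[mu]_s `| f s |.

(* the measure rho P_{mu_1} ... P_{mu_m}, evaluated on B:
   (rho P_{mu_1} ... P_{mu_m})(B) = rho (P_{mu_1} (... (P_{mu_m} 1_B))) *)
Definition compMeas {dS} {S : measurableType dS} {R : realType} {A : finType}
  (rho : {measure set S -> \bar R}) (p : A -> R.-pker S ~> S) (mus : seq (S -> A))
  (B : set S) : \bar R :=
  \int[rho]_s foldr (fun mu g => Pop p mu g) (fun x => (\1_B x)%:E) mus s.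

Definition is_density {dS} {S : measurableType dS} {R : realType}
  (mu : {measure set S -> \bar R}) (nu : set S -> \bar R) (f : S -> \bar R) : Prop :=
  [/\ measurable_fun setT f, (forall x, 0 <= f x) &
      forall B, measurable B -> nu B = \int[mu]_(x in B) f x].

Definition concA {dS} {S : measurableType dS} {R : realType} {A : finType}
  (rho0 rho1 : {measure set S -> \bar R}) (p : A -> R.-pker S ~> S) (m : nat) : \bar R :=
  ereal_sup [set ess_sup rho0 f | f in
    [set f | exists mus : seq (S -> A), [/\ size mus = m,
         (forall mu, List.In mu mus -> is_policy mu) &
         is_density rho0 (compMeas rho1 p mus) f]]].

Definition concentrability {dS} {S : measurableType dS} {R : realType} {A : finType}
  (rho0 rho1 : {measure set S -> \bar R}) (p : A -> R.-pker S ~> S) : Prop :=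
  forall m : nat, (1 <= m)%N ->
    (forall mus : seq (S -> A), size mus = m ->
       (forall mu, List.In mu mus -> is_policy mu) ->
       exists f, is_density rho0 (compMeas rho1 p mus) f)
    /\ concA rho0 rho1 p m < +oo.

(* Main.v *)
Require Import Defs.
From HB Require Import structures.
From mathcomp Require Import all_boot all_order all_algebra.
From mathcomp Require Import all_classical all_reals all_analysis measurable_realfun ess_sup_inf.
From mathcomp Require Import ring lra.
Import Order.TTheory GRing.Theory Num.Theory.
Import numFieldNormedType.Exports.
Local Open Scope classical_set_scope.
Local Open Scope ring_scope.
Local Open Scope ereal_scope.

Section MDP.
Context {dS : measure_display} {S : measurableType dS} {R : realType} {A : finType}.
Variable p : A -> R.-pker S ~> S.

Lemma meas_pol (mu : S -> A) (F : A -> S -> \bar R) : is_policy mu ->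
  (forall a, measurable_fun setT (F a)) -> measurable_fun setT (fun s => F (mu s) s).
Proof.
move=> hmu hF.
have -> : (fun s => F (mu s) s) =
   (fun s => \sum_(a <- index_enum A) ((\1_(mu @^-1` [set a]) s)%:E * F a s)).
  apply/funext => s; rewrite (bigD1 (mu s)) //= big1 ?adde0.
  - by rewrite indicE mem_set// mul1e.
  - move=> a /negbTE ha; rewrite indicE memNset ?mul0e //= => h.
    by rewrite h eqxx in ha.
apply: emeasurable_sum => a; apply: emeasurable_funM => //.
by apply/measurable_EFinP; apply: measurable_indic; exact: hmu.
Qed.

Lemma meas_kpol mu U : is_policy mu -> measurable U ->
  measurable_fun setT (fun s => p (mu s) s U).
Proof.
move=> hmu mU; apply: (meas_pol mu (fun a s => p a s U)) => // a.
exact: measurable_kernel.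
Qed.

Lemma Pop_meas mu g : is_policy mu -> (forall x, 0 <= g x) ->
  measurable_fun setT g -> measurable_fun setT (Pop p mu g).
Proof.
move=> hmu g0 mg; rewrite /Pop.
apply: (measurable_fun_integral_kernel (l := fun s => p (mu s) s)) => //.
by move=> U mU; exact: meas_kpol.
Qed.

Lemma Pop_ge0 mu g s : (forall x, 0 <= g x) -> 0 <= Pop p mu g s.
Proof. by move=> g0; apply: integral_ge0 => x _. Qed.

Lemma Pop_le mu f g s : (forall x, 0 <= f x) -> measurable_fun setT f ->
  measurable_fun setT g -> (forall x, f x <= g x) -> Pop p mu f s <= Pop p mu g s.
Proof. by move=> f0 mf mg fg; apply: ge0_le_integral => // x _. Qed.

Lemma Pop_leM mu g (c : R) s : (forall x, 0 <= g x <= c%:E) ->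
  measurable_fun setT g -> Pop p mu g s <= c%:E.
Proof.
move=> gc mg; rewrite /Pop.
apply: (@le_trans _ _ (\int[p (mu s) s]_y (cst c%:E) y)).
  apply: ge0_le_integral => // x _; first by case/andP: (gc x).
  by case/andP: (gc x).
by rewrite integral_cst // prob_kernel mule1.
Qed.

Lemma PopZ mu g (c : R) s : (0 <= c)%R -> (forall x, 0 <= g x) ->
  measurable_fun setT g -> Pop p mu (fun x => c%:E * g x) s = c%:E * Pop p mu g s.
Proof. by move=> c0 g0 mg; rewrite /Pop ge0_integralZl_EFin. Qed.

Definition chain (mus : seq (S -> A)) (g : S -> \bar R) :=
  foldr (fun mu g => Pop p mu g) g mus.

Lemma chain_ok mus g : (forall mu, List.In mu mus -> is_policy mu) ->
  (forall x, 0 <= g x) -> measurable_fun setT g ->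
  (forall x, 0 <= chain mus g x) /\ measurable_fun setT (chain mus g).
Proof.
move=> hm g0 mg; elim: mus hm => [|mu mus IH] hm //=.
have [h1 h2] := IH (fun m hi => hm m (or_intror hi)).
split; first by move=> x; exact: Pop_ge0.
by apply: Pop_meas => //; apply: hm; left.
Qed.


Section stepM.
Variables (rho : {measure set S -> \bar R}) (mu : S -> A).

Definition stepM (hmu : is_policy mu) (B : set S) := \int[rho]_s p (mu s) s B.

Variable hmu : is_policy mu.

Let stepM0 : stepM hmu set0 = 0.
Proof.
by rewrite /stepM (eq_integral (cst 0)) ?integral0// => y _; rewrite measure0.
Qed.

Let stepM_ge0 U : 0 <= stepM hmu U. Proof. exact: integral_ge0. Qed.

Let stepM_sigma_additive : semi_sigma_additive (stepM hmu).
Proof.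
move=> U mU tU mUU; rewrite [X in _ --> X](_ : _ =
  \int[rho]_y (\sum_(n <oo) p (mu y) y (U n))); last first.
  apply: eq_integral => V _.
  by apply/esym/cvg_lim => //; exact/measure_semi_sigma_additive.
apply/cvg_closeP; split.
  by apply: is_cvg_nneseries => n _ _; exact: integral_ge0.
rewrite closeE// integral_nneseries// => n.
exact: meas_kpol.
Qed.

HB.instance Definition _ := isMeasure.Build _ _ R
  (stepM hmu) stepM0 stepM_ge0 stepM_sigma_additive.

Import HBNNSimple.

Let integral_stepM_nnsfun (f : {nnsfun S >-> R}) :
  \int[stepM hmu]_z (f z)%:E = \int[rho]_y (\int[p (mu y) y]_z (f z)%:E).
Proof.
under [in LHS]eq_integral do rewrite fimfunE -fsumEFin//.
rewrite ge0_integral_fsum//; last 2 first.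
  - by move=> r; exact/measurable_EFinP/measurableT_comp.
  - by move=> r z _; rewrite EFinM nnfun_muleindic_ge0.
under [in RHS]eq_integral.
  move=> y _.
  under eq_integral.
    by move=> z _; rewrite fimfunE -fsumEFin//; over.
  rewrite /= ge0_integral_fsum//; last 2 first.
    - by move=> r; exact/measurable_EFinP/measurableT_comp.
    - by move=> r z _; rewrite EFinM nnfun_muleindic_ge0.
  under eq_fsbigr.
    move=> r _.
    rewrite (integralZl_indic _ (fun r => f @^-1` [set r]))//; last first.
      by move=> r0; rewrite preimage_nnfun0.
    rewrite integral_indic// setIT.
    over.
  over.
rewrite /= ge0_integral_fsum//; last 2 first.
  - move=> r; apply: measurable_funeM.
    exact: meas_kpol.
  - move=> n y _.
    have := mulemu_ge0 (fun n => f @^-1` [set n]).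
    by apply; exact: preimage_nnfun0.
apply: eq_fsbigr => r _.
rewrite (integralZl_indic _ (fun r => f @^-1` [set r]))//; last first.
  exact: preimage_nnfun0.
rewrite integral_indic//= setIT /stepM.
have [r0|r0] := leP 0%R r.
  by rewrite ge0_integralZl//; exact: meas_kpol.
rewrite integral0_eq ?mule0.
  by rewrite integral0_eq// => y _; rewrite preimage_nnfun0// measure0 mule0.
by move=> y _; rewrite preimage_nnfun0// measure0.
Qed.

Lemma integral_stepM f : (forall z, 0 <= f z) -> measurable_fun [set: S] f ->
  \int[stepM hmu]_z f z = \int[rho]_y Pop p mu f y.
Proof.
move=> f0 mf; rewrite /Pop.
pose f_ := nnsfun_approx measurableT mf.
transitivity (\int[stepM hmu]_z (lim ((f_ n z)%:E @[n --> \oo]))).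
  by apply/eq_integral => z _; apply/esym/cvg_lim => //=; exact: cvg_nnsfun_approx.
rewrite monotone_convergence//; last 3 first.
  by move=> n; exact/measurable_EFinP.
  by move=> n z _; rewrite lee_fin.
  by move=> z _ a b ab; rewrite lee_fin; exact/lefP/nd_nnsfun_approx.
rewrite (_ : (fun _ => _) =
    (fun n => \int[rho]_y (\int[p (mu y) y]_z (f_ n z)%:E)))//; last first.
  by apply/funext => n; rewrite integral_stepM_nnsfun.
transitivity (\int[rho]_y lim ((\int[p (mu y) y]_z (f_ n z)%:E) @[n --> \oo])).
  rewrite -monotone_convergence//; last 3 first.
  - move=> n; apply: (measurable_fun_integral_kernel (l := fun s => p (mu s) s)).
    + by move=> U mU; exact: meas_kpol.
    + by move=> z; rewrite lee_fin.
    + exact/measurable_EFinP.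
  - by move=> n y _; apply: integral_ge0 => // z _; rewrite lee_fin.
  - move=> y _ a b ab; apply: ge0_le_integral => //.
    + by move=> z _; rewrite lee_fin.
    + exact/measurable_EFinP.
    + exact/measurable_EFinP.
    + by move=> z _; rewrite lee_fin; exact/lefP/nd_nnsfun_approx.
apply: eq_integral => y _; rewrite -monotone_convergence//; last 3 first.
  - by move=> n; exact/measurable_EFinP.
  - by move=> n z _; rewrite lee_fin.
  - by move=> z _ a b ab; rewrite lee_fin; exact/lefP/nd_nnsfun_approx.
by apply: eq_integral => z _; apply/cvg_lim => //; exact: cvg_nnsfun_approx.
Qed.

End stepM.

End MDP.

Section MDP2.
Context {dS : measure_display} {S : measurableType dS} {R : realType} {A : finType}.
Variable p : A -> R.-pker S ~> S.

Lemma chain_meas (mus : seq (S -> A)) : (forall mu, List.In mu mus -> is_policy mu) ->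
  forall rho : {measure set S -> \bar R}, exists nu : {measure set S -> \bar R},
  (forall B, measurable B -> nu B = compMeas rho p mus B) /\
  (forall g, (forall x, 0 <= g x) -> measurable_fun setT g ->
     \int[nu]_x g x = \int[rho]_x chain p mus g x).
Proof.
elim: mus => [|mu mus IH] hm rho.
  exists rho; split => //.
  by move=> B mB; rewrite /compMeas /= integral_indic // setIT.
have hmu : is_policy mu := hm mu (or_introl erefl).
have hm' : forall m, List.In m mus -> is_policy m := fun m hi => hm m (or_intror hi).
have [nu [h1 h2]] := IH hm' (stepM p rho mu hmu).
exists nu; split.
  move=> B mB; rewrite h1 // /compMeas /=.
  have [|//|c0 cm] := chain_ok p mus (fun x => (\1_B x)%:E) hm'.
    by move=> x; rewrite lee_fin indicE ler0n.
    by apply/measurable_EFinP; exact: measurable_indic.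
  by rewrite integral_stepM.
move=> g g0 mg; rewrite h2 //.
have [c0 cm] := chain_ok p mus g hm' g0 mg.
by rewrite integral_stepM.
Qed.

Lemma conc_bound (rho0 rho1 : probability S R) mus g :
  concentrability rho0 rho1 p -> (1 <= size mus)%N ->
  (forall mu, List.In mu mus -> is_policy mu) ->
  (forall x, 0 <= g x) -> measurable_fun setT g ->
  \int[rho1]_x chain p mus g x <= concA rho0 rho1 p (size mus) * \int[rho0]_x g x.
Proof.
move=> hc hs hm g0 mg.
have [hex hfin] := hc _ hs.
have [f [mf f0 hf]] := hex mus erefl hm.
have [nu [h1 h2]] := chain_meas mus hm rho1.
rewrite -h2 //.
set c := ess_sup rho0 f.
have cle : c <= concA rho0 rho1 p (size mus).
  by apply: ereal_sup_ubound; exists f => //; exists mus; split.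
have c0 : 0 <= c.
  apply: ess_sup_gee; first by move: (probability_setT rho0) => /= ->; rewrite lte01.
  by apply: aeW => x; exact: f0.
have cfin : c \is a fin_num by rewrite ge0_fin_numE // (le_lt_trans cle hfin).
pose k := NngNum (fine_ge0 c0).
have kc : (k%:num)%:E = c by rewrite /= fineK.
have hnu : forall B, measurable B -> nu B <= mscale k rho0 B.
  move=> B mB; rewrite h1 // (hf B mB) /mscale kc.
  apply: (@le_trans _ _ (\int[rho0]_(x in B) cst c x)); last by rewrite integral_cst.
  apply: ae_ge0_le_integral => //.
  - exact: measurable_funTS.
  - by apply: filterS (ess_sup_ge rho0 f) => x hx _.
apply: le_trans (ge0_le_measure_integral hnu measurableT g0 mg) _.
rewrite ge0_integral_mscale // kc.
by apply: lee_wpmul2r => //; apply: integral_ge0 => x _.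
Qed.


Lemma emax_ub (l : seq A) (F : A -> \bar R) a : a \in l -> F a <= \big[maxe/-oo]_(b <- l) F b.
Proof.
elim: l => // b l IH; rewrite in_cons big_cons => /orP[/eqP->|al].
  by rewrite le_max lexx.
by rewrite le_max IH ?orbT.
Qed.

Lemma emax_le (l : seq A) (F : A -> \bar R) c : (forall a, F a <= c) ->
  \big[maxe/-oo]_(b <- l) F b <= c.
Proof.
move=> hF; elim: l => [|b l IH]; first by rewrite big_nil leNye.
by rewrite big_cons ge_max hF IH.
Qed.

Lemma emax_att (l : seq A) (F : A -> \bar R) : l != [::] ->
  exists a, a \in l /\ \big[maxe/-oo]_(b <- l) F b = F a.
Proof.
elim: l => // b l IH _; rewrite big_cons.
case: l IH => [|c l] IH.
  by exists b; rewrite big_nil mem_seq1 eqxx; split => //; rewrite max_l // leNye.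
have [a [al ->]] := IH erefl.
have [ab|ba] := leP (F b) (F a).
  by exists a; rewrite in_cons al orbT; split => //; rewrite max_r.
by exists b; rewrite in_cons eqxx; split => //; rewrite max_l // ltW.
Qed.

Lemma emax_meas (l : seq A) (F : A -> S -> \bar R) :
  (forall a, measurable_fun setT (F a)) ->
  measurable_fun setT (fun s => \big[maxe/-oo]_(a <- l) F a s).
Proof.
move=> hF; elim: l => [|b l IH].
  by under eq_fun do rewrite big_nil; exact: measurable_cst.
under eq_fun do rewrite big_cons.
exact: measurable_maxe.
Qed.

Lemma meas_all (l : seq A) (Q : A -> S -> bool) :
  (forall b, measurable [set s | Q b s]) ->
  measurable [set s | all (fun b => Q b s) l].
Proof.
move=> hQ; elim: l => [|b l IH] /=.
  by rewrite (_ : [set s | true] = setT) //; apply/seteqP; split.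
rewrite (_ : [set s | Q b s && all (fun b0 => Q b0 s) l] =
   [set s | Q b s] `&` [set s | all (fun b0 => Q b0 s) l]).
  exact: measurableI.
by apply/seteqP; split => s /=; [move/andP|move=> [-> ->]].
Qed.


Definition Gint (h : S -> \bar R) a s := \int[p a s]_y h y.
Definition isbest h s a := all (fun b => Gint h b s <= Gint h a s) (index_enum A).
Definition gpol (a0 : A) h s := nth a0 (index_enum A) (find (isbest h s) (index_enum A)).

Lemma has_best (a0 : A) h s : has (isbest h s) (index_enum A).
Proof.
have ne : index_enum A != [::].
  by apply/eqP => e; have := mem_index_enum a0; rewrite e.
have [a [_ ha]] := emax_att (index_enum A) (fun b => Gint h b s) ne.
apply/hasP; exists a; first exact: mem_index_enum.
apply/allP => b _; rewrite -ha; apply: emax_ub; exact: mem_index_enum.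
Qed.

Lemma gpol_best a0 h s b : Gint h b s <= Gint h (gpol a0 h s) s.
Proof.
have /allP H := nth_find a0 (has_best a0 h s).
exact: H b (mem_index_enum b).
Qed.

Lemma gpol_eq a0 h s a : (gpol a0 h s == a) = isbest h s a &&
  all (fun b => (index b (index_enum A) < index a (index_enum A))%N ==> ~~ isbest h s b)
    (index_enum A).
Proof.
set e := index_enum A.
have ue : uniq e := index_enum_uniq A.
have fs : (find (isbest h s) e < size e)%N by rewrite -has_find has_best.
apply/idP/idP.
  move/eqP <-; rewrite /gpol; apply/andP; split; first exact: nth_find (has_best a0 h s).
  apply/allP => b be; apply/implyP => hb; rewrite index_uniq // in hb.
  by rewrite -(nth_index a0 be) before_find.
case/andP => ha hall.
have ae : a \in e := mem_index_enum a.
have le1 : (find (isbest h s) e <= index a e)%N.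
  rewrite leqNgt; apply/negP => lt; have := before_find a0 lt.
  by rewrite nth_index // ha.
have le2 : (index a e <= find (isbest h s) e)%N.
  rewrite leqNgt; apply/negP => lt.
  have bi : index (nth a0 e (find (isbest h s) e)) e = find (isbest h s) e :=
    index_uniq a0 fs ue.
  have := allP hall _ (mem_nth a0 fs); rewrite bi lt /=.
  by rewrite nth_find // has_best.
have hf : find (isbest h s) e = index a e by apply/eqP; rewrite eqn_leq le1 le2.
by apply/eqP; rewrite /gpol -/e hf nth_index.
Qed.

Lemma Gint_meas h b : (forall x, 0 <= h x) -> measurable_fun setT h ->
  measurable_fun setT (Gint h b).
Proof.
move=> h0 mh; apply: (measurable_fun_integral_kernel (l := p b)) => //.
by move=> U mU; exact: measurable_kernel.
Qed.

Lemma gpol_policy a0 h : (forall x, 0 <= h x) -> measurable_fun setT h ->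
  is_policy (gpol a0 h).
Proof.
move=> h0 mh a.
have mb : forall b, measurable [set s | isbest h s b].
  move=> b; apply: meas_all => c.
  rewrite -[X in measurable X]setTI.
  by apply: measurable_lee => //; exact: Gint_meas.
rewrite (_ : gpol a0 h @^-1` [set a] = [set s | isbest h s a] `&`
  [set s | all (fun b => (index b (index_enum A) < index a (index_enum A))%N ==>
     ~~ isbest h s b) (index_enum A)]).
  apply: measurableI => //; apply: meas_all => b.
  case: ltnP => hb /=.
    rewrite (_ : [set s | ~~ isbest h s b] = ~` [set s | isbest h s b]).
      exact: measurableC.
    by apply/seteqP; split => s /=; [move/negP|move/negP].
  by rewrite (_ : [set s | true] = setT) //; apply/seteqP; split.
apply/seteqP; split => s /=.
  by move=> /eqP; rewrite gpol_eq => /andP[-> ->].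
by move=> [h1 h2]; apply/eqP; rewrite gpol_eq h1 h2.
Qed.


Lemma chain_le mus f g x : (forall mu, List.In mu mus -> is_policy mu) ->
  (forall x, 0 <= f x) -> measurable_fun setT f ->
  (forall x, 0 <= g x) -> measurable_fun setT g ->
  (forall x, f x <= g x) -> chain p mus f x <= chain p mus g x.
Proof.
move=> hm f0 mf g0 mg fg; elim: mus hm x => [|mu mus IH] hm x //=.
have hm' : forall m, List.In m mus -> is_policy m := fun m hi => hm m (or_intror hi).
have [cf0 cfm] := chain_ok p mus f hm' f0 mf.
have [cg0 cgm] := chain_ok p mus g hm' g0 mg.
by apply: Pop_le => // y; exact: IH.
Qed.

Lemma chain_Z mus g (c : R) x : (forall mu, List.In mu mus -> is_policy mu) ->
  (0 <= c)%R -> (forall x, 0 <= g x) -> measurable_fun setT g ->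
  chain p mus (fun y => c%:E * g y) x = c%:E * chain p mus g x.
Proof.
move=> hm c0 g0 mg; elim: mus hm x => [|mu mus IH] hm x //=.
have hm' : forall m, List.In m mus -> is_policy m := fun m hi => hm m (or_intror hi).
have [cg0 cgm] := chain_ok p mus g hm' g0 mg.
rewrite (_ : chain p mus (fun y => c%:E * g y) = fun y => c%:E * chain p mus g y).
  exact: PopZ.
by apply/funext => y; exact: IH.
Qed.

Lemma chain_cat m1 m2 g : chain p (m1 ++ m2) g = chain p m1 (chain p m2 g).
Proof. by rewrite /chain foldr_cat. Qed.

Lemma concA_ge0 (rho0 rho1 : probability S R) (mus : seq (S -> A)) :
  concentrability rho0 rho1 p -> (1 <= size mus)%N ->
  (forall mu, List.In mu mus -> is_policy mu) -> 0 <= concA rho0 rho1 p (size mus).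
Proof.
move=> hc hs hm.
have [hex _] := hc _ hs.
have [f [mf f0 hf]] := hex mus erefl hm.
apply: (@le_trans _ _ (ess_sup rho0 f)).
  apply: ess_sup_gee; first by move: (probability_setT rho0) => /= ->; rewrite lte01.
  by apply: aeW => x; exact: f0.
by apply: ereal_sup_ubound; exists f => //; exists mus; split.
Qed.

End MDP2.

Section Arith.
Variable R : realType.
Implicit Types x y z w c : \bar R.

Lemma abs_symE x y : x \is a fin_num -> y \is a fin_num -> `|x - y| = `|y - x|.
Proof. by case: x => // x _; case: y => // y _; rewrite -!EFinB /= distrC. Qed.

Lemma fin_le_abs x y : x \is a fin_num -> y \is a fin_num -> x <= y + `|x - y|.
Proof.
case: x => // x _; case: y => // y _; rewrite -!EFinB /= -EFinD lee_fin.
have := ler_norm (x - y); lra.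
Qed.

Lemma fin_abs_le x y c : x \is a fin_num -> y \is a fin_num ->
  x <= y + c -> y <= x + c -> `|x - y| <= c.
Proof.
case: x => // x _; case: y => // y _; case: c => [c| |] //=; rewrite ?leey //.
rewrite -!EFinD !lee_fin /= => h1 h2.
by rewrite ler_norml; apply/andP; split; lra.
Qed.

Lemma fin_tri x y z w : x \is a fin_num -> y \is a fin_num -> z \is a fin_num ->
  w \is a fin_num -> `|x - w| <= `|y - x| + `|y - z| + `|z - w|.
Proof.
case: x => // x _; case: y => // y _; case: z => // z _; case: w => // w _.
rewrite -!EFinB /= -!EFinD lee_fin.
have hyx : (`|y - x| = `|x - y|)%R by rewrite -normrN opprB.
rewrite hyx.
have -> : (x - w = (x - y) + (y - z) + (z - w))%R by ring.
have := ler_normD (x - y + (y - z))%R (z - w)%R.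
have := ler_normD (x - y)%R (y - z)%R.
lra.
Qed.

End Arith.

Section MDP3.
Context {dS : measure_display} {S : measurableType dS} {R : realType} {A : finType}.
Variables (p : A -> R.-pker S ~> S) (r : S -> A -> R) (Rmax gamma : R) (a0 : A).
Hypotheses (hrm : forall a, measurable_fun setT (fun s => r s a))
  (hrb : forall s a, (0 <= r s a <= Rmax)%R) (hg0 : (0 <= gamma)%R) (hg1 : (gamma < 1)%R)
  (hR0 : (0 <= Rmax)%R).

Let M := (Rmax / (1 - gamma))%R.

Let M_eq : (Rmax + gamma * M = M)%R.
Proof. by rewrite /M; field; rewrite subr_eq0 gt_eqF. Qed.

Let M_ge0 : (0 <= M)%R.
Proof. by rewrite /M divr_ge0 // subr_ge0 ltW. Qed.

Definition term (V : S -> \bar R) a s := (r s a)%:E + gamma%:E * \int[p a s]_y V y.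

Lemma inF_fin (V : S -> \bar R) s : in_F M V -> V s \is a fin_num.
Proof.
move=> [_ hV]; have /andP[h0 h1] := hV s.
by rewrite ge0_fin_numE // (le_lt_trans h1) ?ltry.
Qed.

Lemma inF_ge0 (V : S -> \bar R) : in_F M V -> forall x, 0 <= V x.
Proof. by move=> [_ hV] x; case/andP: (hV x). Qed.

Lemma term_meas V a : in_F M V -> measurable_fun setT (term V a).
Proof.
move=> hV; apply: emeasurable_funD.
  by apply/measurable_EFinP; exact: hrm.
apply: measurable_funeM; apply: (Gint_meas p) => //.
  exact: inF_ge0.
by case: hV.
Qed.

Lemma term_bnd V a s : in_F M V -> 0 <= term V a s <= M%:E.
Proof.
move=> hV; have V0 := inF_ge0 V hV; have [mV bV] := hV.
have /andP[r0 r1] := hrb s a.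
apply/andP; split.
  by apply: adde_ge0; rewrite ?lee_fin // mule_ge0 ?lee_fin //; apply: integral_ge0.
apply: (@le_trans _ _ (Rmax%:E + gamma%:E * M%:E)).
  apply: leeD; first by rewrite lee_fin.
  apply: lee_wpmul2l; first by rewrite lee_fin.
  exact: (Pop_leM p (fun _ => a)).
by rewrite -EFinM -EFinD M_eq.
Qed.

Lemma Tpi_inF mu V : is_policy mu -> in_F M V -> in_F M (Tpi r gamma p mu V).
Proof.
move=> hmu hV; split.
  by apply: (meas_pol mu (fun a => term V a) hmu) => a; exact: term_meas.
move=> s; exact: (term_bnd V (mu s) s hV).
Qed.

Lemma Topt_inF V : in_F M V -> in_F M (Topt r gamma p V).
Proof.
move=> hV; split.
  by apply: (emax_meas (index_enum A) (fun a => term V a)) => a; exact: term_meas.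
move=> s; apply/andP; split.
  apply: (@le_trans _ _ (term V a0 s)); first by case/andP: (term_bnd V a0 s hV).
  exact: (emax_ub (index_enum A) (fun a => term V a s) a0 (mem_index_enum a0)).
by apply: (emax_le (index_enum A) (fun a => term V a s)) => a; case/andP: (term_bnd V a s hV).
Qed.


Definition hdiff (V W : S -> \bar R) := fun x => `|V x - W x|.

Lemma hdiff_ok {V W : S -> \bar R} : in_F M V -> in_F M W ->
  (forall x, 0 <= hdiff V W x) /\ measurable_fun setT (hdiff V W).
Proof.
move=> [mV _] [mW _]; split; first by move=> x; exact: abse_ge0.
apply: measurableT_comp; first exact: abse_measurable.
exact: emeasurable_funB.
Qed.

Lemma hdiff_sym {V W : S -> \bar R} : in_F M V -> in_F M W -> hdiff V W = hdiff W V.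
Proof.
move=> hV hW; apply/funext => x; rewrite /hdiff abs_symE //; exact: inF_fin.
Qed.

Lemma term_fin V a s : in_F M V -> term V a s \is a fin_num.
Proof.
move=> hV; have /andP[h0 h1] := term_bnd V a s hV.
by rewrite ge0_fin_numE // (le_lt_trans h1) ?ltry.
Qed.

Lemma term_le V W a s : in_F M V -> in_F M W ->
  term V a s <= term W a s + gamma%:E * Gint p (hdiff V W) a s.
Proof.
move=> hV hW; have [h0 mh] := hdiff_ok hV hW.
have [mV _] := hV; have [mW _] := hW.
have hi : \int[p a s]_y V y <= \int[p a s]_y W y + \int[p a s]_y hdiff V W y.
  rewrite -ge0_integralD //; last by move=> x _; exact: inF_ge0.
  apply: ge0_le_integral => //.
  - by move=> x _; exact: inF_ge0.
  - apply: emeasurable_funD => //.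
  - by move=> x _; apply: fin_le_abs; exact: inF_fin.
rewrite /term /Gint -addeA leeD2l // -ge0_muleDr; last 2 first.
  - by apply: integral_ge0 => x _; exact: inF_ge0.
  - by apply: integral_ge0 => x _.
by apply: lee_wpmul2l => //; rewrite lee_fin.
Qed.

Lemma Tpi_contr mu V W s : in_F M V -> in_F M W ->
  `|Tpi r gamma p mu V s - Tpi r gamma p mu W s| <= gamma%:E * Pop p mu (hdiff V W) s.
Proof.
move=> hV hW; apply: fin_abs_le.
- exact: (term_fin V (mu s) s hV).
- exact: (term_fin W (mu s) s hW).
- exact: (term_le V W (mu s) s hV hW).
- by rewrite (hdiff_sym hV hW); exact: (term_le W V (mu s) s hW hV).
Qed.

Lemma Topt_contr V W s : in_F M V -> in_F M W ->
  `|Topt r gamma p V s - Topt r gamma p W s| <=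
     gamma%:E * Pop p (gpol p a0 (hdiff V W)) (hdiff V W) s.
Proof.
move=> hV hW.
have ne : index_enum A != [::].
  by apply/eqP => e; have := mem_index_enum a0; rewrite e.
apply: fin_abs_le.
- exact: inF_fin (Topt_inF V hV).
- exact: inF_fin (Topt_inF W hW).
- have [a1 [_ e1]] := emax_att (index_enum A) (fun a => term V a s) ne.
  have -> : Topt r gamma p V s = term V a1 s := e1.
  apply: le_trans (term_le V W a1 s hV hW) _; apply: leeD.
    exact: (emax_ub (index_enum A) (fun a => term W a s) a1 (mem_index_enum a1)).
  apply: lee_wpmul2l; first by rewrite lee_fin.
  exact: gpol_best.
- have [a2 [_ e2]] := emax_att (index_enum A) (fun a => term W a s) ne.
  have -> : Topt r gamma p W s = term W a2 s := e2.
  apply: le_trans (term_le W V a2 s hW hV) _; apply: leeD.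
    exact: (emax_ub (index_enum A) (fun a => term V a s) a2 (mem_index_enum a2)).
  apply: lee_wpmul2l; first by rewrite lee_fin.
  rewrite (hdiff_sym hW hV).
  exact: gpol_best.
Qed.

Lemma iter_inF (Op : (S -> \bar R) -> S -> \bar R) :
  (forall V, in_F M V -> in_F M (Op V)) ->
  forall n V, in_F M V -> in_F M (iter n Op V).
Proof. by move=> hOp; elim=> [|n IH] V hV //=; apply: hOp; exact: IH. Qed.

Lemma iter_chain (Op : (S -> \bar R) -> S -> \bar R)
    (sel : (S -> \bar R) -> (S -> \bar R) -> S -> A) :
  (forall V, in_F M V -> in_F M (Op V)) ->
  (forall V W, in_F M V -> in_F M W -> is_policy (sel V W) /\
     forall s, `|Op V s - Op W s| <= gamma%:E * Pop p (sel V W) (hdiff V W) s) ->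
  forall n V W, in_F M V -> in_F M W -> exists mus : seq (S -> A),
   [/\ size mus = n, (forall mu, List.In mu mus -> is_policy mu) &
     forall s, `|iter n Op V s - iter n Op W s| <= (gamma ^+ n)%:E * chain p mus (hdiff V W) s].
Proof.
move=> hOp hsel; elim=> [|n IH] V W hV hW.
  by exists [::]; split => //= s; rewrite expr0 mul1e.
have [mus [hs hp hb]] := IH V W hV hW.
have hV' := iter_inF Op hOp n V hV; have hW' := iter_inF Op hOp n W hW.
have [hpol hc] := hsel _ _ hV' hW'.
have [h0 mh] := hdiff_ok hV' hW'.
have [c0 mc] := chain_ok p mus (hdiff V W) hp (proj1 (hdiff_ok hV hW)) (proj2 (hdiff_ok hV hW)).
exists (sel (iter n Op V) (iter n Op W) :: mus); split => /=.
- by rewrite hs.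
- by move=> mu [<-|/hp].
move=> s; apply: le_trans (hc s) _.
rewrite exprS EFinM -muleA; apply: lee_wpmul2l; first by rewrite lee_fin.
rewrite -PopZ //; last exact: exprn_ge0.
apply: Pop_le => //.
exact: measurable_funeM.
Qed.


Section Vpi.
Variables (pi : S -> A) (hpi : is_policy pi).

Let rpi := fun s => (r s (pi s))%:E.
Let u t := iter t (Pop p pi) rpi.

Lemma u_ok t : (forall x, 0 <= u t x <= Rmax%:E) /\ measurable_fun setT (u t).
Proof.
elim: t => [|t [ub um]].
  split; first by move=> x; rewrite /u /= /rpi !lee_fin.
  by apply: (meas_pol pi (fun a s => (r s a)%:E) hpi) => a; apply/measurable_EFinP.
have u0 : forall x, 0 <= u t x by move=> x; case/andP: (ub x).
split.
  move=> x; apply/andP; split; first exact: Pop_ge0.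
  exact: Pop_leM.
exact: Pop_meas.
Qed.

Lemma u_ge0 t x : 0 <= u t x.
Proof. by case: (u_ok t) => h _; case/andP: (h x). Qed.

Lemma Vpi_inF : in_F M (Vpi r gamma p pi).
Proof.
split.
  rewrite /Vpi; apply: ge0_emeasurable_sum.
    by move=> k x _ _; rewrite mule_ge0 ?lee_fin ?exprn_ge0 //; exact: u_ge0.
  by move=> k _; apply: measurable_funeM; case: (u_ok k).
move=> s; apply/andP; split.
  by apply: nneseries_ge0 => n _ _; rewrite mule_ge0 ?lee_fin ?exprn_ge0 //; exact: u_ge0.
rewrite /Vpi; apply: lime_le.
  by apply: is_cvg_nneseries => n _ _; rewrite mule_ge0 ?lee_fin ?exprn_ge0 //; exact: u_ge0.
apply: nearW => n.
apply: (@le_trans _ _ (\sum_(0 <= t < n) ((Rmax * gamma ^+ t)%R)%:E)).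
  apply: lee_sum => t _; rewrite EFinM [X in _ <= X]muleC.
  apply: lee_wpmul2l; first by rewrite lee_fin exprn_ge0.
  by case: (u_ok t) => h _; case/andP: (h s).
rewrite sumEFin lee_fin.
change (series (geometric Rmax gamma) n <= M)%R.
rewrite geometric_seriesE ?lt_eqF //= /M.
apply: ler_wpM2r; first by rewrite invr_ge0 subr_ge0 ltW.
have := exprn_ge0 n hg0 => h.
have := mulr_ge0 hR0 h; lra.
Qed.

Lemma Vpi_fix : Tpi r gamma p pi (Vpi r gamma p pi) = Vpi r gamma p pi.
Proof.
apply/funext => s; rewrite /Tpi.
have hint : \int[p (pi s) s]_y Vpi r gamma p pi y =
    \sum_(0 <= t <oo) ((gamma ^+ t)%:E * u t.+1 s).
  rewrite /Vpi integral_nneseries //; last 2 first.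
  - by move=> n; apply: measurable_funeM; case: (u_ok n).
  - by move=> n x _; rewrite mule_ge0 ?lee_fin ?exprn_ge0 //; exact: u_ge0.
  apply: eq_eseriesr => t _.
  rewrite ge0_integralZl_EFin //; last exact: exprn_ge0.
  - by move=> x _; exact: u_ge0.
  - by case: (u_ok t).
rewrite hint -nneseriesZl; last first.
  by move=> i _; rewrite mule_ge0 ?lee_fin ?exprn_ge0 //; exact: u_ge0.
rewrite [RHS]/Vpi [in RHS]nneseries_recl //; last first.
  by move=> k _; rewrite mule_ge0 ?lee_fin ?exprn_ge0 //; exact: u_ge0.
rewrite -[in RHS](nneseries_addn 1); last first.
  by move=> i; rewrite mule_ge0 ?lee_fin ?exprn_ge0 //; exact: u_ge0.
congr (_ + _); first by rewrite expr0 mul1e.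
apply: eq_eseriesr => t _; rewrite addn1 exprS EFinM -muleA //.
Qed.

End Vpi.

End MDP3.

Theorem mainTheorem4 (dS : measure_display) (S : measurableType dS) (R : realType)
  (A : finType) (r : S -> A -> R) (Rmax : R) (p : A -> R.-pker S ~> S) (gamma : R)
  (rho0 rho1 : probability S R) :
  (forall a, measurable_fun setT (fun s => r s a)) ->
  (forall s a, (0 <= r s a <= Rmax)%R) ->
  (0 <= gamma < 1)%R ->
  concentrability rho0 rho1 p ->
  forall (pi pi' : S -> A) (V : S -> \bar R) (d h : nat),
  is_policy pi -> is_policy pi' -> in_F (Rmax / (1 - gamma)) V -> (1 <= d)%N ->
  let J := iter h (Tpi r gamma p pi) V in
  let B' := gamma%:E * concA rho0 rho1 p 1 + (gamma ^+ (d + h))%:E * concA rho0 rho1 p (d + h) in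
  norm1 rho1 (fun s => iter d (Topt r gamma p) (Vpi r gamma p pi) s - Tpi r gamma p pi' (Vpi r gamma p pi) s)
  <= B' * norm1 rho0 (fun s => V s - Vpi r gamma p pi s)
     + norm1 rho1 (fun s => iter d (Topt r gamma p) J s - Tpi r gamma p pi' V s).
Proof.
move=> hrm hrb /andP[hg0 hg1] hc pi pi' V d h hpi hpi' hV hd.
cbv zeta.
set J := iter h (Tpi r gamma p pi) V.
have [s0 _] : exists s0 : S, True.
  apply: contrapT => hne.
  have e : [set: S] = set0 by apply/seteqP; split => x // _; apply: hne; exists x.
  have := probability_setT rho1; rewrite e measure0 => h01.
  by move: (@lte01 R); rewrite h01 ltxx.
pose a0 := pi s0.
have hR0 : (0 <= Rmax)%R by case/andP: (hrb s0 a0) => h1 h2; exact: le_trans h1 h2.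
set M := (Rmax / (1 - gamma))%R.
set Vp := Vpi r gamma p pi.
have hVp : in_F M Vp := Vpi_inF p r Rmax gamma hrm hrb hg0 hg1 hR0 pi hpi.
have hfix : Tpi r gamma p pi Vp = Vp := Vpi_fix p r Rmax gamma hrm hrb hg0 pi hpi.
have hTpiF : forall mu, is_policy mu -> forall W, in_F M W -> in_F M (Tpi r gamma p mu W).
  by move=> mu hmu W hW; exact: (Tpi_inF p r Rmax gamma hrm hrb hg0 hg1 mu W hmu hW).
have hToptF : forall W, in_F M W -> in_F M (Topt r gamma p W).
  by move=> W hW; exact: (Topt_inF p r Rmax gamma a0 hrm hrb hg0 hg1 W hW).
have hJ : in_F M J := iter_inF Rmax gamma _ (hTpiF pi hpi) h V hV.
have iter_fix : forall n, iter n (Tpi r gamma p pi) Vp = Vp.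
  by elim=> //= n ->; exact: hfix.
have [mus2 [hs2 hp2 hb2]] := iter_chain p Rmax gamma hg0 (Tpi r gamma p pi) (fun _ _ => pi)
  (hTpiF pi hpi)
  (fun W1 W2 h1 h2 => conj hpi (fun s => Tpi_contr p r Rmax gamma hrb hg0 hg1 pi W1 W2 s h1 h2))
  h V Vp hV hVp.
rewrite iter_fix in hb2.
have [mus1 [hs1 hp1 hb1]] := iter_chain p Rmax gamma hg0 (Topt r gamma p)
  (fun W1 W2 => gpol p a0 (hdiff W1 W2)) hToptF
  (fun W1 W2 h1 h2 => conj (gpol_policy p a0 _ (proj1 (hdiff_ok Rmax gamma h1 h2))
       (proj2 (hdiff_ok Rmax gamma h1 h2)))
     (fun s => Topt_contr p r Rmax gamma a0 hrm hrb hg0 hg1 W1 W2 s h1 h2))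
  d J Vp hJ hVp.
set X := iter d (Topt r gamma p) Vp.
set Y := iter d (Topt r gamma p) J.
set Z := Tpi r gamma p pi' V.
set W := Tpi r gamma p pi' Vp.
have hX : in_F M X := iter_inF Rmax gamma _ hToptF d Vp hVp.
have hY : in_F M Y := iter_inF Rmax gamma _ hToptF d J hJ.
have hZ : in_F M Z := hTpiF pi' hpi' V hV.
have hW : in_F M W := hTpiF pi' hpi' Vp hVp.
have [hd0 mhd] := hdiff_ok Rmax gamma hV hVp.
have [fa0 mfa] := hdiff_ok Rmax gamma hY hX.
have [fb0 mfb] := hdiff_ok Rmax gamma hY hZ.
have [fc0 mfc] := hdiff_ok Rmax gamma hZ hW.
have [fl0 mfl] := hdiff_ok Rmax gamma hX hW.
set mus := mus1 ++ mus2.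
have hp : forall mu, List.In mu mus -> is_policy mu.
  by move=> mu hi; case: (List.in_app_or _ _ _ hi) => hi'; [exact: hp1 | exact: hp2].
have hsz : size mus = (d + h)%N by rewrite size_cat hs1 hs2.
have [ch0 chm] := chain_ok p mus (hdiff V Vp) hp hd0 mhd.
have hp' : forall mu, List.In mu [:: pi'] -> is_policy mu by move=> mu [<-|].
have [ch0' chm'] := chain_ok p [:: pi'] (hdiff V Vp) hp' hd0 mhd.
have ba : forall s, hdiff Y X s <= (gamma ^+ (d + h))%:E * chain p mus (hdiff V Vp) s.
  move=> s; apply: le_trans (hb1 s) _.
  rewrite exprD EFinM -muleA; apply: lee_wpmul2l; first by rewrite lee_fin exprn_ge0.
  have [ch20 ch2m] := chain_ok p mus2 (hdiff V Vp) hp2 hd0 mhd.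
  rewrite /mus (chain_cat p mus1 mus2) -(chain_Z p mus1 (chain p mus2 (hdiff V Vp)) (gamma ^+ h) s hp1
    (exprn_ge0 h hg0) ch20 ch2m).
  have [hJ0 mhJ] := hdiff_ok Rmax gamma hJ hVp.
  apply: chain_le => //.
  - by move=> x; rewrite mule_ge0 ?lee_fin ?exprn_ge0.
  - exact: measurable_funeM.
have bc : forall s, hdiff Z W s <= gamma%:E * chain p [:: pi'] (hdiff V Vp) s.
  by move=> s; exact: (Tpi_contr p r Rmax gamma hrb hg0 hg1 pi' V Vp s hV hVp).
have hA1 := concA_ge0 p rho0 rho1 [:: pi'] hc erefl hp'.
have hA2 : 0 <= concA rho0 rho1 p (size mus).
  by apply: concA_ge0 => //; rewrite hsz addn_gt0 hd.
rewrite hsz in hA2.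
have step1 : norm1 rho1 (fun s => X s - W s) <=
    \int[rho1]_s (hdiff Y X s + hdiff Y Z s + hdiff Z W s).
  apply: ge0_le_integral.
  - done.
  - by move=> x _; exact: abse_ge0.
  - exact: mfl.
  - by apply: emeasurable_funD => //; exact: emeasurable_funD.
  - move=> x _; apply: fin_tri.
    + exact: (inF_fin Rmax gamma X x hX).
    + exact: (inF_fin Rmax gamma Y x hY).
    + exact: (inF_fin Rmax gamma Z x hZ).
    + exact: (inF_fin Rmax gamma W x hW).
rewrite (@ge0_integralD _ _ _ rho1 setT measurableT
  (fun s => hdiff Y X s + hdiff Y Z s) (hdiff Z W)
  (fun x _ => adde_ge0 (fa0 x) (fb0 x)) (emeasurable_funD mfa mfb)
  (fun x _ => fc0 x) mfc) in step1.
rewrite (@ge0_integralD _ _ _ rho1 setT measurableT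
  (hdiff Y X) (hdiff Y Z) (fun x _ => fa0 x) mfa (fun x _ => fb0 x) mfb) in step1.
have ia : \int[rho1]_s hdiff Y X s <=
    (gamma ^+ (d + h))%:E * (concA rho0 rho1 p (d + h) * norm1 rho0 (fun s => V s - Vp s)).
  apply: (@le_trans _ _ (\int[rho1]_s ((gamma ^+ (d + h))%:E * chain p mus (hdiff V Vp) s))).
    apply: ge0_le_integral.
    - done.
    - by move=> x _; exact: fa0.
    - exact: mfa.
    - exact: measurable_funeM.
    - by move=> x _; exact: ba.
  rewrite ge0_integralZl_EFin //; last exact: exprn_ge0.
  apply: lee_wpmul2l; first by rewrite lee_fin exprn_ge0.
  rewrite -hsz; apply: conc_bound => //.
  by rewrite hsz addn_gt0 hd.
have ic : \int[rho1]_s hdiff Z W s <=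
    gamma%:E * (concA rho0 rho1 p 1 * norm1 rho0 (fun s => V s - Vp s)).
  apply: (@le_trans _ _ (\int[rho1]_s (gamma%:E * chain p [:: pi'] (hdiff V Vp) s))).
    apply: ge0_le_integral.
    - done.
    - by move=> x _; exact: fc0.
    - exact: mfc.
    - exact: measurable_funeM.
    - by move=> x _; exact: bc.
  rewrite ge0_integralZl_EFin //.
  apply: lee_wpmul2l; first by rewrite lee_fin.
  exact: (conc_bound p rho0 rho1 [:: pi'] (hdiff V Vp) hc erefl hp' hd0 mhd).
apply: le_trans step1 _.
have -> : norm1 rho1 (fun s => Y s - Z s) = \int[rho1]_s hdiff Y Z s by [].
rewrite ge0_muleDl; last 2 first.
  - by rewrite mule_ge0 ?lee_fin.
  - by rewrite mule_ge0 ?lee_fin ?exprn_ge0.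
apply: le_trans (leeD (leeD ia (lexx _)) ic) _.
by rewrite !muleA addeC addeA.
Qed.
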